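(* Let $n,m\ge 1$, let $G\in\mathbb{R}^{2n\times 2n}$ be symmetric, let $C\in\mathbb{R}^{2m\times 2n}$, set $A=\Sigma_n(G+C^\top\Sigma_m C/2)$, and let $\mathcal{C}=(\Sigma_n C^\top\Sigma_m, A\Sigma_n C^\top\Sigma_m,\ldots,A^{2n-1}\Sigma_n C^\top\Sigma_m)$ and $\mathcal{O}=(C^\top, A^\top C^\top,\ldots,(A^\top)^{2n-1}C^\top)^\top$. Then the linear quantum system determined by $(G,C)$ has a decoherence-free (DF) subsystem if and only if $$\mathrm{Ker}(\mathcal{O})\cap\mathrm{Ker}(\mathcal{O}\Sigma_n)\neq\{0\}.$$ Moreover, in that case there always exists a real $2n\times 2\ell$ matrix $T_1$ ($\ell\ge1$) with $\mathrm{Range}(T_1)=\mathrm{Ker}(\mathcal{O})\cap\mathrm{Ker}(\mathcal{O}\Sigma_n)$ and $T_1^\top\Sigma_n T_1=\Sigma_\ell$, and $\hat x_{\rm DF}=T_1^\top\hat x$ is a DF mode.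
   Context: For $k\ge1$, $\Sigma_k=\mathrm{diag}\{\Sigma,\ldots,\Sigma\}$ ($2k\times 2k$) with $\Sigma=\begin{pmatrix}0&1\\-1&0\end{pmatrix}$. The linear quantum system determined by $(G,C)$ is $d\hat x=A\hat x\,dt+\Sigma_nC^\top\Sigma_m\,d\hat{\mathcal W}$ with output $d\hat{\mathcal W}^{\rm out}=C\hat x\,dt+d\hat{\mathcal W}$, where $\hat x=(\hat q_1,\hat p_1,\ldots,\hat q_n,\hat p_n)^\top$ satisfies the canonical commutation relation $\hat x\hat x^\top-(\hat x\hat x^\top)^\top=i\Sigma_n$, $\hat{\mathcal W}$ is the vector of input noise quadratures and $\hat{\mathcal W}^{\rm out}$ that of the output. Definition: the system has a DF subsystem if there is a subsystem, with variable $\hat x_{\rm DF}=T^\top\hat x$ for a real matrix $T$ with nonzero columns, that is (i) uncontrollable with respect to $\hat{\mathcal W}$ and unobservable with respect to $\hat{\mathcal W}^{\rm out}$, i.e. the columns of $T$ lie in $\mathrm{Ker}(\mathcal{C}^\top)\cap\mathrm{Ker}(\mathcal{O})$ (equivalently $\mathrm{Ker}(\mathcal{C}^\top)\cap\mathrm{Ker}(\mathcal{O})$ is nontrivial), and (ii) whose variable satisfies the canonical commutation relation, i.e. $T^\top\Sigma_nT=\Sigma_\ell$ for some $\ell\ge1$; such $\hat x_{\rm DF}$ is called a DF mode. *)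

(* Defs.v *)
From HB Require Import structures.
From mathcomp Require Import all_boot all_order all_algebra.
Set Implicit Arguments. Unset Strict Implicit. Unset Printing Implicit Defensive.
Import Order.TTheory GRing.Theory Num.Theory.
Local Open Scope ring_scope.

Section DF.
Variable R : realFieldType.

(* Sigma_k = diag{Sigma,...,Sigma} (2k x 2k), Sigma = [[0,1],[-1,0]] *)
Definition Sigma (k : nat) : 'M[R]_(2 * k) :=
  \matrix_(i, j)
    (if ~~ odd i && (j == i.+1 :> nat) then 1
     else if odd i && (j.+1 == i :> nat) then -1 else 0).

Variables n m : nat.

Definition Amat (G : 'M[R]_(2 * n)) (C : 'M[R]_(2 * m, 2 * n)) : 'M[R]_(2 * n) :=
  Sigma n *m (G + 2^-1 *: (C^T *m Sigma m *m C)).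

Definition ctrb (G : 'M[R]_(2 * n)) (C : 'M[R]_(2 * m, 2 * n))
  : 'M[R]_(2 * n, \sum_(k < 2 * n) 2 * m) :=
  \mxrow_(k < 2 * n) (Amat G C ^+ k *m Sigma n *m C^T *m Sigma m).

Definition obs (G : 'M[R]_(2 * n)) (C : 'M[R]_(2 * m, 2 * n))
  : 'M[R]_(\sum_(k < 2 * n) 2 * m, 2 * n) :=
  \mxcol_(k < 2 * n) ((((Amat G C)^T ^+ k) *m C^T)^T).

(* x_DF = T^T x is a DF mode: T has nonzero columns, its columns lie in
   Ker(ctrb^T) /\ Ker(obs), and T^T Sigma_n T = Sigma_l. *)
Definition is_DF_mode (G : 'M[R]_(2 * n)) (C : 'M[R]_(2 * m, 2 * n))
  (l : nat) (T : 'M[R]_(2 * n, 2 * l)) : Prop :=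
  [/\ (forall j, col j T != 0),
      (ctrb G C)^T *m T = 0,
      obs G C *m T = 0 &
      T^T *m Sigma n *m T = Sigma l].

Definition has_DF_subsystem (G : 'M[R]_(2 * n)) (C : 'M[R]_(2 * m, 2 * n)) : Prop :=
  exists l, (0 < l)%N /\ exists T : 'M[R]_(2 * n, 2 * l), is_DF_mode G C T.

End DF.

(* Main.v *)
Require Import Defs.
From HB Require Import structures.
From mathcomp Require Import all_boot all_order all_algebra.
From mathcomp Require Import zify ring lra.
Set Implicit Arguments. Unset Strict Implicit. Unset Printing Implicit Defensive.
Import Order.TTheory GRing.Theory Num.Theory.
Local Open Scope ring_scope.

Section S.
Variable R : realFieldType.

Lemma SigmaE k (i t : 'I_(2*k)) : Sigma R k i t =
  (if odd i then -1 else 1) * ((t : nat) == (if odd i then i.-1 else i.+1))%:R.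
Proof.
rewrite mxE; case: (boolP (odd i)) => oi /=.
  have E : (t.+1 == i :> nat) = (t == i.-1 :> nat).
    by move: oi; case: (nat_of_ord i) => //= i' _; rewrite eqSS.
  by rewrite E; case: eqP => _; rewrite ?mulr1 ?mulr0.
by case: eqP => _; rewrite ?mul1r.
Qed.

Lemma Sigma_tr k : (Sigma R k)^T = - Sigma R k.
Proof.
apply/matrixP => i j; rewrite !mxE.
have hi := odd_double_half i; have hj := odd_double_half j.
move: hi hj; rewrite -!muln2.
case: (odd i); case: (odd j) => /= hi hj;
  repeat (case: eqP => /= ?); rewrite ?oppr0 ?opprK //; lia.
Qed.

Lemma sum_eq_nat N (a : nat) : (a < N)%N ->
  \sum_(t < N) ((t : nat) == a)%:R = 1 :> R.
Proof.
move=> ha; rewrite (bigD1 (Ordinal ha)) //= eqxx big1 ?addr0 // => t.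
by move=> /eqP ht; case: eqP => // ht'; case: ht; apply: val_inj.
Qed.

Lemma Sigma_mul_tr k : Sigma R k *m (Sigma R k)^T = 1%:M.
Proof.
apply/matrixP => i j; rewrite !mxE.
under eq_bigr do rewrite [X in _ * X]mxE !SigmaE.
have hi := odd_double_half i; have hj := odd_double_half j.
have hib := ltn_ord i; have hjb := ltn_ord j.
move: hi hj; rewrite -!muln2 => hi hj.
case: (eqVneq i j) => [<-|nij].
  rewrite ?eqxx /=.
  transitivity (\sum_(t < 2 * k) ((t : nat) == (if odd i then i.-1 else i.+1))%:R : R).
    apply: eq_bigr => t _; case: eqP => _; last by rewrite !mulr0.
    by case: (odd i); rewrite ?mulr1 ?mulrNN ?mulr1.
  by apply: sum_eq_nat; move: hi; case: (odd i) => /= hi; lia.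
rewrite ?(negbTE nij) big1 // => t _.
case: eqP => ha; case: eqP => hb; rewrite ?mulr0 ?mul0r //.
have nij' : (i : nat) <> j by move=> e; move/eqP: nij; apply; apply: val_inj.
move: hi hj ha hb; case: (odd i); case: (odd j) => /= hi hj ha hb; lia.
Qed.

Definition dot N (u v : 'rV[R]_N) : R := (u *m v^T) 0 0.

Lemma dotE N (u v : 'rV[R]_N) : dot u v = \sum_k u 0 k * v 0 k.
Proof. by rewrite /dot mxE; apply: eq_bigr => k _; rewrite mxE. Qed.

Lemma dotC N (u v : 'rV[R]_N) : dot u v = dot v u.
Proof. by rewrite !dotE; apply: eq_bigr => k _; rewrite mulrC. Qed.

Lemma dotDl N (u w v : 'rV[R]_N) : dot (u + w) v = dot u v + dot w v.
Proof. by rewrite !dotE -big_split; apply: eq_bigr => k _; rewrite mxE mulrDl. Qed.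

Lemma dotZl N a (u v : 'rV[R]_N) : dot (a *: u) v = a * dot u v.
Proof. by rewrite !dotE mulr_sumr; apply: eq_bigr => k _; rewrite mxE mulrA. Qed.

Lemma dotNl N (u v : 'rV[R]_N) : dot (- u) v = - dot u v.
Proof. by rewrite -scaleN1r dotZl mulN1r. Qed.

Lemma dotZr N a (u v : 'rV[R]_N) : dot u (a *: v) = a * dot u v.
Proof. by rewrite dotC dotZl dotC. Qed.

Lemma dot_gt0 N (u : 'rV[R]_N) : u != 0 -> 0 < dot u u.
Proof.
move=> nz; rewrite dotE lt_def; apply/andP; split; last first.
  by apply: sumr_ge0 => k _; rewrite -expr2 sqr_ge0.
apply/negP => /eqP h; move/negP: nz; apply; apply/eqP/rowP => k.
have := psumr_eq0P (P := predT) (F := fun k => u 0 k * u 0 k).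
move=> /(_ (fun k _ => ltac:(by rewrite -expr2 sqr_ge0)) h k isT) /eqP.
by rewrite mxE -expr2 sqrf_eq0 => /eqP.
Qed.

Lemma m11_eq0 (A : 'M[R]_1) : (A == 0) = (A 0 0 == 0).
Proof.
apply/eqP/eqP => [->|h]; first by rewrite mxE.
by rewrite [A]mx11_scalar h; apply/matrixP => i j; rewrite !mxE mul0rn.
Qed.

Section Fam.
Variables (N : nat) (J : 'M[R]_N).
Hypotheses (hJt : J^T = - J) (hJJ : J *m J^T = 1%:M).

Lemma dotJr (u v : 'rV[R]_N) : dot u (v *m J) = - dot (u *m J) v.
Proof.
by rewrite /dot trmx_mul hJt mulNmx mulmxN mulmxA [LHS]mxE.
Qed.

Lemma dotJJ (u v : 'rV[R]_N) : dot (u *m J) (v *m J) = dot u v.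
Proof. by rewrite /dot trmx_mul mulmxA -(mulmxA u) hJJ mulmx1. Qed.

Lemma dotJ0 (u : 'rV[R]_N) : dot u (u *m J) = 0.
Proof. have := dotJr u u; rewrite [dot (u *m J) u]dotC => h; lra. Qed.

Lemma mulJJ (u : 'rV[R]_N) : u *m J *m J = - u.
Proof.
have : J *m J = - 1%:M by rewrite -[X in _ *m X]opprK -hJt mulmxN hJJ.
by rewrite -mulmxA => ->; rewrite mulmxN mulmx1.
Qed.

Lemma family k (S : 'M[R]_N) : (\rank S <= k)%N ->
  (forall u : 'rV_N, (u <= S)%MS -> (u *m J <= S)%MS) ->
  exists l (x : nat -> 'rV[R]_N),
  [/\ forall i, (i < l)%N -> (x i <= S)%MS /\ x i != 0,
      forall i j, (i < l)%N -> (j < l)%N -> i != j -> dot (x i) (x j) = 0,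
      forall i j, (i < l)%N -> (j < l)%N -> dot (x i) (x j *m J) = 0 &
      forall u, (u <= S)%MS -> exists a b : nat -> R,
        u = \sum_(i < l) (a i *: x i + b i *: (x i *m J))].
Proof.
have base (S0 : 'M[R]_N) : S0 = 0 -> exists l (x : nat -> 'rV[R]_N),
  [/\ forall i, (i < l)%N -> (x i <= S0)%MS /\ x i != 0,
      forall i j, (i < l)%N -> (j < l)%N -> i != j -> dot (x i) (x j) = 0,
      forall i j, (i < l)%N -> (j < l)%N -> dot (x i) (x j *m J) = 0 &
      forall u, (u <= S0)%MS -> exists a b : nat -> R,
        u = \sum_(i < l) (a i *: x i + b i *: (x i *m J))].
  move=> ->; exists 0%N, (fun _ => 0); split => //.
  move=> u; rewrite submx0 => /eqP ->; exists (fun _ => 0), (fun _ => 0).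
  by rewrite big_ord0.
elim: k S => [|k IH] S hr hS.
  by apply: base; apply/eqP; rewrite -mxrank_eq0 -leqn0.
case: (eqVneq S 0) => [/base//|nzS].
set x := nz_row S.
have xS : (x <= S)%MS by apply: nz_row_sub.
have nzx : x != 0 by rewrite nz_row_eq0.
have cpos := dot_gt0 nzx.
set c := dot x x.
set W := (S :&: kermx (col_mx x (x *m J))^T)%MS.
have memW (u : 'rV_N) : (u <= W)%MS = [&& (u <= S)%MS, dot u x == 0 & dot u (x *m J) == 0].
  by rewrite sub_capmx sub_kermx tr_col_mx mul_mx_row row_mx_eq0 !m11_eq0.
have WS (u : 'rV_N) : (u <= W)%MS -> (u <= S)%MS by rewrite memW => /and3P[].
have hW (u : 'rV_N) : (u <= W)%MS -> (u *m J <= W)%MS.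
  rewrite !memW => /and3P[uS /eqP h1 /eqP h2]; rewrite hS //=.
  by rewrite dotJJ h1 -[dot (u *m J) x]opprK -dotJr h2 oppr0 eqxx.
have rW : (\rank W <= k)%N.
  have : (W < S)%MS.
    rewrite ltmxE capmxSl /=; apply/negP => SW.
    have := submx_trans xS SW; rewrite memW => /and3P[_ /eqP h _].
    by move: cpos; rewrite /c h ltxx.
  by move/rank_ltmx => h; rewrite -ltnS; exact: leq_trans h hr.
have [l [x' [h1 h2 h3 h4]]] := IH W rW hW.
exists l.+1, (fun i => if i is i'.+1 then x' i' else x); split.
- case => [|i] /=; first by split.
  by rewrite ltnS => /h1 [/WS ? ?].
- case => [|i] [|j] //= hi hj nij.
  + by rewrite dotC; have [/[!memW] /and3P[_ /eqP -> _] _] := h1 _ hj.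
  + by have [/[!memW] /and3P[_ /eqP -> _] _] := h1 _ hi.
  + by apply: h2.
- case => [|i] [|j] //= hi hj.
  + by apply: dotJ0.
  + rewrite dotC; have [/hW /[!memW] /and3P[_ /eqP -> _] _] := h1 _ hj; done.
  + by have [/[!memW] /and3P[_ _ /eqP ->] _] := h1 _ hi.
  + by apply: h3.
- move=> u uS.
  set a0 := dot u x / c; set b0 := dot u (x *m J) / c.
  set w := u - (a0 *: x + b0 *: (x *m J)).
  have wW : (w <= W)%MS.
    rewrite memW; apply/and3P; split.
    + apply: addmx_sub => //; rewrite -scaleN1r; apply: scalemx_sub.
      by apply: addmx_sub; apply: scalemx_sub => //; apply: hS.
    + rewrite /w dotDl dotNl dotDl !dotZl [dot (x *m J) x]dotC dotJ0 -/c.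
      by rewrite /a0 mulr0 addr0 mulfVK ?subrr // gt_eqF.
    + rewrite /w dotDl dotNl dotDl !dotZl dotJJ dotJ0 -/c.
      by rewrite /b0 mulr0 add0r mulfVK ?subrr // gt_eqF.
  have [a [b hw]] := h4 w wW.
  exists (fun i => if i is i'.+1 then a i' else a0),
         (fun i => if i is i'.+1 then b i' else b0).
  rewrite big_ord_recl /= -hw /w.
  by rewrite addrC subrK.
Qed.
End Fam.

Lemma trmx_exp d k (M : 'M[R]_d) : (M ^+ k)^T = (M^T) ^+ k.
Proof.
elim: k => [|k IH]; first by rewrite !expr0 trmx1.
by rewrite exprS -mulmxE trmx_mul IH exprSr.
Qed.

Lemma unobs d q p (A B : 'M[R]_d) (K : 'M[R]_(d, q)) (C : 'M[R]_(q, d))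
  (Y : 'M[R]_(d, p)) : B = - A + K *m C -> forall N,
  (forall k, (k < N)%N -> C *m A ^+ k *m Y = 0) ->
  forall k, (k < N)%N -> C *m B ^+ k *m Y = 0.
Proof.
move=> hB N h.
have claim k : (k < N)%N -> B ^+ k *m Y = (-1) ^+ k *: (A ^+ k *m Y).
  elim: k => [|k IH] hk; first by rewrite !expr0 scale1r.
  rewrite exprS -mulmxE -mulmxA IH ?(ltnW hk) // -scalemxAr hB mulmxDl.
  rewrite -(mulmxA K) (mulmxA C) h ?(ltnW hk) // !mulmx0 addr0.
  by rewrite mulNmx mulmxA mulmxE -exprS [(-1) ^+ k.+1]exprSr -scalerA scaleN1r.
by move=> k hk; rewrite -mulmxA claim // -scalemxAr mulmxA h // scaler0.
Qed.

Section Sys.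
Variables (n m : nat) (G : 'M[R]_(2 * n)) (C : 'M[R]_(2 * m, 2 * n)).
Hypothesis hG : G^T = G.
Local Notation J := (Sigma R n).
Local Notation Jm := (Sigma R m).
Local Notation A := (Amat G C).
Definition Bmat := - A + (J *m C^T *m Jm) *m C.

Lemma JAt : J *m A^T = Bmat *m J.
Proof.
set H := C^T *m Jm *m C.
have Ht : H^T = - H.
  by rewrite /H !trmx_mul trmxK Sigma_tr mulNmx mulmxN mulmxA.
set M := G + 2^-1 *: H.
have hA : A = J *m M by [].
have hM : M^T = M - H.
  rewrite /M raddfD /= linearZ /= hG Ht scalerN.
  have e : H = 2^-1 *: H + 2^-1 *: H.
    by rewrite -scalerDl -mulr2n -[_ *+ 2]mulr_natl mulfV ?scale1r // pnatr_eq0.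
  by rewrite [X in _ = _ - X]e opprD addrA addrK.
rewrite /Bmat hA trmx_mul hM Sigma_tr.
have -> : J *m C^T *m Jm *m C = J *m H by rewrite /H !mulmxA.
by rewrite !mulmxN mulmxA mulmxBr mulmxBl mulmxDl mulNmx opprB addrC.
Qed.

Lemma JAtk k : J *m (A^T) ^+ k = Bmat ^+ k *m J.
Proof.
elim: k => [|k IH]; first by rewrite !expr0 mulmx1 mul1mx.
by rewrite !exprS -!mulmxE mulmxA JAt -!mulmxA IH.
Qed.

Lemma obs_eq0 p (Y : 'M[R]_(2 * n, p)) : obs G C *m Y = 0 <->
  forall k, (k < 2 * n)%N -> C *m A ^+ k *m Y = 0.
Proof.
have blk (k : nat) : ((A^T ^+ k) *m C^T)^T = C *m A ^+ k.
  by rewrite trmx_mul trmxK trmx_exp trmxK.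
rewrite /obs mxcol_mul; split => [h k hk | h].
  have := congr1 (fun M => submxcol M (Ordinal hk)) h.
  by rewrite mxcolK submxcol0 /= blk.
apply/mxcolP => k; rewrite mxcolK submxcol0.
by rewrite blk h.
Qed.

Lemma ctrb_eq0 p (X : 'M[R]_(2 * n, p)) : (ctrb G C)^T *m X = 0 <->
  forall k, (k < 2 * n)%N -> C *m J *m (A^T) ^+ k *m X = 0.
Proof.
have blk (k : nat) (Y : 'M[R]_(2 * n, p)) :
    (A ^+ k *m J *m C^T *m Jm)^T *m Y = Jm *m (C *m J *m (A^T) ^+ k *m Y).
  rewrite trmx_mul (trmx_mul (A ^+ k *m J)) (trmx_mul (A ^+ k)) trmxK trmx_exp !Sigma_tr.
  by rewrite !mulNmx !mulmxN mulNmx opprK !mulmxA.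
have JmK (Z : 'M[R]_(2 * m, p)) : Jm *m Z = 0 -> Z = 0.
  move=> hZ; have := congr1 (mulmx (Jm)^T) hZ.
  rewrite mulmx0 mulmxA Sigma_tr mulNmx -mulmxN -Sigma_tr Sigma_mul_tr mul1mx.
  by [].
rewrite /ctrb tr_mxrow mxcol_mul; split => [h k hk | h].
  have := congr1 (fun M => submxcol M (Ordinal hk)) h.
  by rewrite mxcolK submxcol0 /= blk => /JmK.
apply/mxcolP => k; rewrite mxcolK submxcol0.
by rewrite blk h // mulmx0.
Qed.

Lemma ctrb_obs p (X : 'M[R]_(2 * n, p)) :
  (ctrb G C)^T *m X = 0 <-> obs G C *m J *m X = 0.
Proof.
have e k : C *m J *m (A^T) ^+ k *m X = C *m Bmat ^+ k *m (J *m X).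
  by rewrite -(mulmxA C) JAtk !mulmxA.
rewrite ctrb_eq0 -mulmxA obs_eq0; split => h k hk.
  apply: (@unobs _ _ _ Bmat A (J *m C^T *m Jm) C) (2 * n)%N _ k hk.
    by rewrite /Bmat opprD opprK subrK.
  by move=> j hj; rewrite -e h.
rewrite e; apply: (@unobs _ _ _ A Bmat (J *m C^T *m Jm) C) (2 * n)%N _ k hk => //.
Qed.
End Sys.

Lemma mul_tr_entry p q r (A : 'M[R]_(p, r)) (B : 'M[R]_(q, r)) i j :
  (A *m B^T) i j = dot (row i A) (row j B).
Proof. by rewrite dotE !mxE; apply: eq_bigr => k _; rewrite !mxE. Qed.
End S.

Theorem theorem1 (R : realFieldType) (n m : nat) (hn : (0 < n)%N) (hm : (0 < m)%N)
  (G : 'M[R]_(2 * n)) (C : 'M[R]_(2 * m, 2 * n)) :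
  G^T = G ->
  (has_DF_subsystem G C <->
     exists v : 'cV[R]_(2 * n),
       [/\ v != 0, obs G C *m v = 0 & (obs G C *m Sigma R n) *m v = 0])
  /\
  ((exists v : 'cV[R]_(2 * n),
       [/\ v != 0, obs G C *m v = 0 & (obs G C *m Sigma R n) *m v = 0]) ->
   exists l : nat, (0 < l)%N /\
     exists T1 : 'M[R]_(2 * n, 2 * l),
       [/\ (forall v : 'cV[R]_(2 * n),
              (exists w : 'cV[R]_(2 * l), v = T1 *m w) <->
              (obs G C *m v = 0 /\ (obs G C *m Sigma R n) *m v = 0)),
           T1^T *m Sigma R n *m T1 = Sigma R l &
           is_DF_mode G C T1]).
Proof.
move=> hG.
have hJt := Sigma_tr R n; have hJJ := Sigma_mul_tr R n.
set J := Sigma R n in hJt hJJ *.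
set O := obs G C.
have part2 : (exists v : 'cV[R]_(2 * n),
       [/\ v != 0, O *m v = 0 & (O *m J) *m v = 0]) ->
   exists l : nat, (0 < l)%N /\
     exists T1 : 'M[R]_(2 * n, 2 * l),
       [/\ (forall v : 'cV[R]_(2 * n),
              (exists w : 'cV[R]_(2 * l), v = T1 *m w) <->
              (O *m v = 0 /\ (O *m J) *m v = 0)),
           T1^T *m J *m T1 = Sigma R l &
           is_DF_mode G C T1].
  case=> v [nzv hv1 hv2].
  set M := row_mx (O^T) ((O *m J)^T).
  set S := kermx M.
  have memS (u : 'rV[R]_(2 * n)) :
      (u <= S)%MS <-> O *m u^T = 0 /\ O *m J *m u^T = 0.
    rewrite sub_kermx mul_mx_row row_mx_eq0.
    split => [/andP[/eqP h1 /eqP h2]|[h1 h2]].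
      by split; apply: trmx_inj; rewrite trmx_mul trmxK trmx0 ?h1 ?h2.
    apply/andP; split; apply/eqP; apply: trmx_inj;
      by rewrite trmx_mul trmxK trmx0 ?h1 ?h2.
  have invS (u : 'rV[R]_(2 * n)) : (u <= S)%MS -> (u *m J <= S)%MS.
    move=> /memS [h1 h2]; apply/memS; rewrite trmx_mul hJt; split.
      by rewrite mulNmx mulmxN mulmxA h2 oppr0.
    have JJ : J *m J = - 1%:M by rewrite -[X in _ *m X]opprK -hJt mulmxN hJJ.
    by rewrite mulNmx mulmxN -(mulmxA O) (mulmxA J) JJ mulNmx mul1mx mulmxN h1 !oppr0.
  have [l [x [h1 h2 h3 h4]]] := family hJt hJJ (leqnn (\rank S)) invS.
  have vS : (v^T <= S)%MS by apply/memS; rewrite trmxK.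
  have lpos : (0 < l)%N.
    case: l x h1 h2 h3 h4 => // x _ _ _ /(_ _ vS) [a [b]].
    rewrite big_ord0 => /eqP; rewrite -trmx0 (inj_eq trmx_inj) => /eqP v0.
    by move: nzv; rewrite v0 eqxx.
  have cpos i : (i < l)%N -> 0 < dot (x i) (x i).
    by move=> hi; apply: dot_gt0; have [] := h1 _ hi.
  have cne i : (i < l)%N -> dot (x i) (x i) != 0.
    by move=> hi; rewrite gt_eqF // cpos.
  set e := fun p : nat => if odd p then (dot (x p./2) (x p./2))^-1 *: (x p./2 *m J)
                          else x p./2.
  set T := \matrix_(p < 2 * l, k < 2 * n) e p 0 k.
  have rowT (p : 'I_(2 * l)) : row p T = e p by apply/rowP => k; rewrite !mxE.
  have half_lt (p : 'I_(2 * l)) : (p./2 < l)%N.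
    have := odd_double_half p; have := ltn_ord p; rewrite -muln2; lia.
  have eS (p : 'I_(2 * l)) : (e p <= S)%MS.
    have [xs _] := h1 _ (half_lt p).
    rewrite /e; case: (odd p) => //; apply: scalemx_sub; exact: invS.
  have TS : (T <= S)%MS by apply/row_subP => p; rewrite rowT.
  have ST : (S <= T)%MS.
    apply/rV_subP => u /h4 [a [b ->]]; apply: summx_sub => i _.
    have hi := ltn_ord i.
    have o1 : (i.*2 < 2 * l)%N by rewrite -muln2; lia.
    have o2 : (i.*2.+1 < 2 * l)%N by rewrite -muln2; lia.
    have ex : x i = row (Ordinal o1) T.
      by rewrite rowT /e /= odd_double doubleK.
    have exJ : x i *m J = dot (x i) (x i) *: row (Ordinal o2) T.
      rewrite rowT /e /= odd_double /= uphalf_double scalerA mulfV ?scale1r //.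
      by rewrite gt_eqF // cpos.
    apply: addmx_sub; apply: scalemx_sub.
      by rewrite ex row_sub.
    by rewrite exJ; apply: scalemx_sub; rewrite row_sub.
  have TM : T *m M = 0 by apply/eqP; rewrite -sub_kermx.
  move: TM; rewrite mul_mx_row => /eqP; rewrite row_mx_eq0 => /andP[/eqP t1 /eqP t2].
  have OT : O *m T^T = 0 by apply: trmx_inj; rewrite trmx_mul trmxK t1 trmx0.
  have OJT : O *m J *m T^T = 0 by apply: trmx_inj; rewrite trmx_mul trmxK t2 trmx0.
  have sym : T *m J *m T^T = Sigma R l.
    apply/matrixP => p q; rewrite mul_tr_entry row_mul !rowT.
    have hp := odd_double_half p; have hq := odd_double_half q.
    move: hp hq; rewrite -!muln2 => hp hq.
    have hil := half_lt p; have hjl := half_lt q.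
    rewrite /e [RHS]mxE.
    move: hp hq; case op: (odd p); case oq: (odd q) => /= hp hq.
    + rewrite -scalemxAl (mulJJ hJt hJJ) dotZl dotZr dotNl h3 //.
      rewrite oppr0 !mulr0; case: eqP => // ?; lia.
    + rewrite -scalemxAl (mulJJ hJt hJJ) dotZl dotNl.
      case: (eqVneq (p./2) (q./2)) => hij.
        rewrite hij mulrN mulVf ?cne //.
        by case: eqP => // ?; lia.
      rewrite (h2 (p./2) (q./2)) // oppr0 mulr0; case: eqP => // ?; lia.
    + rewrite dotZr (dotJJ hJJ).
      case: (eqVneq (p./2) (q./2)) => hij.
        rewrite hij mulVf ?cne //.
        by case: eqP => // ?; lia.
      rewrite (h2 (p./2) (q./2)) // mulr0; case: eqP => // ?; lia.
    + rewrite dotC h3 //; case: eqP => // ?; lia.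
  exists l; split => //; exists T^T; split.
  - move=> u; split.
      case=> w ->.
      have h : ((T^T *m w)^T <= S)%MS.
        by rewrite trmx_mul trmxK; apply: submx_trans TS; apply/submxP; exists w^T.
      by move/memS: h; rewrite trmxK.
    move=> hu; have : (u^T <= S)%MS by apply/memS; rewrite trmxK.
    move=> /submx_trans /(_ ST) /submxP [D hD].
    by exists D^T; rewrite -trmx_mul -hD trmxK.
  - by rewrite trmxK.
  - split.
    + move=> j; rewrite -tr_row rowT; apply/negP => /eqP.
      rewrite -trmx0 => /trmx_inj /eqP; apply/negP.
      have hj := half_lt j; have [_ nzx] := h1 _ hj.
      rewrite /e; case: (odd j) => //.
      rewrite scaler_eq0 invr_eq0 gt_eqF ?cpos //=.
      apply/negP => /eqP hx; move/negP: nzx; apply.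
      by rewrite -oppr_eq0 -(mulJJ hJt hJJ) hx mul0mx.
    + by apply/ctrb_obs.
    + exact: OT.
    + by rewrite trmxK.
split; last exact: part2.
split.
  case=> l [lpos [T [hc hctrb hobs hsym]]].
  have hj : (0 < 2 * l)%N by lia.
  exists (col (Ordinal hj) T); split.
  - exact: hc.
  - by rewrite colE mulmxA hobs mul0mx.
  - have hOJ : O *m J *m T = 0 by apply: (proj1 (@ctrb_obs R n m G C hG _ T)).
    by rewrite colE mulmxA hOJ mul0mx.
move/part2 => [l [lpos [T1 [_ _ hdf]]]].
by exists l; split => //; exists T1.
Qed.
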